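(* $\mathfrak{ss}_c^{ui}=\mathfrak d$ and $(\mathfrak{ss}_c^{ui})^\perp=\mathfrak b$.
   Context: Let $\mathfrak S$ be the set of all sequences $\mathbf a=\langle a_i:i\in\omega\rangle$ of rational numbers with $a_i\to0$. For infinite $X\subseteq\omega$ with increasing enumeration $\langle i_n\rangle$, $\sum_X\mathbf a$ denotes $\sum_n a_{i_n}$; $[\omega]^\omega_\omega$ is the set of infinite coinfinite subsets of $\omega$. A series tends to infinity if its partial sums tend to $+\infty$ or to $-\infty$; it is conditional if the sum of its positive terms is $+\infty$ and the sum of its negative terms is $-\infty$; it tends unconditionally to infinity if it tends to infinity and is not conditional. Let $\mathfrak S_{ui}$ be the set of $\mathbf a\in\mathfrak S$ with $\sum\mathbf a$ tending unconditionally to infinity. $\mathfrak{ss}_c^{ui}$ is the least cardinality of $\mathcal X\subseteq[\omega]^\omega_\omega$ such that every $\mathbf a\in\mathfrak S_{ui}$ has some $X\in\mathcal X$ with $\sum_X\mathbf a$ convergent (to a real number); $(\mathfrak{ss}_c^{ui})^\perp$ is the least cardinality of $\mathcal A\subseteq\mathfrak S_{ui}$ such that no $X\in[\omega]^\omega_\omega$ makes $\sum_X\mathbf a$ convergent for all $\mathbf a\in\mathcal A$. $\mathfrak b$, $\mathfrak d$ are the bounding and dominating numbers. *)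

(* Defs.v *)
From HB Require Import structures.
From mathcomp Require Import all_boot all_order all_algebra.
From mathcomp Require Import boolp classical_sets functions cardinality reals topology normedtype sequences.
Set Implicit Arguments. Unset Strict Implicit. Unset Printing Implicit Defensive.
Import Order.TTheory GRing.Theory Num.Theory.
Import numFieldNormedType.Exports.
Local Open Scope classical_set_scope.
Local Open Scope ring_scope.

Definition rseq := nat -> rat.

Definition tends_to_zero (a : rseq) : Prop :=
  forall e : rat, 0 < e -> exists N, forall n, (N <= n)%N -> `|a n| < e.

Definition psum (a : rseq) (m : nat) : rat := \sum_(i < m) a i.

(* partial sums of the subseries sum_X a: sum of the a_i with i < m and i in X
   (a re-indexing-free description of the partial sums of sum_n a_{i_n}) *)
Definition psumX (X : set nat) (a : rseq) (m : nat) : rat :=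
  \sum_(i < m | `[< X i >]) a i.

Definition tends_pinfty (s : nat -> rat) : Prop :=
  forall M : rat, exists N, forall n, (N <= n)%N -> M < s n.
Definition tends_minfty (s : nat -> rat) : Prop :=
  forall M : rat, exists N, forall n, (N <= n)%N -> s n < M.

Definition series_tends_infty (a : rseq) : Prop :=
  tends_pinfty (psum a) \/ tends_minfty (psum a).

Definition series_conditional (a : rseq) : Prop :=
  tends_pinfty (psum (fun i => Num.max (a i) 0)) /\
  tends_minfty (psum (fun i => Num.min (a i) 0)).

Definition S_ui (a : rseq) : Prop :=
  tends_to_zero a /\ series_tends_infty a /\ ~ series_conditional a.

Definition inf_coinf (X : set nat) : Prop :=
  infinite_set X /\ infinite_set (~` X).

Definition subseries_converges (R : realType) (X : set nat) (a : rseq) : Prop :=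
  exists l : R, ((fun m => ratr (psumX X a m)) : nat -> R) @ \oo --> l.

Definition ss_family (R : realType) (XX : set (set nat)) : Prop :=
  XX `<=` inf_coinf /\
  forall a, S_ui a -> exists2 X, XX X & subseries_converges R X a.

Definition ss_perp_family (R : realType) (A : set rseq) : Prop :=
  A `<=` S_ui /\
  ~ (exists X, inf_coinf X /\ forall a, A a -> subseries_converges R X a).

Definition le_star (f g : nat -> nat) : Prop :=
  exists N, forall n, (N <= n)%N -> (f n <= g n)%N.

Definition dominating_family (D : set (nat -> nat)) : Prop :=
  forall f, exists2 g, D g & le_star f g.

Definition unbounded_family (B : set (nat -> nat)) : Prop :=
  forall g, exists2 f, B f & ~ le_star f g.

(* min{|P| : P holds} = min{|Q| : Q holds} (cardinals are well ordered under
   choice, so equality of the minima is the conjunction of these two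
   comparisons) *)
Definition same_min_card T U (P : set T -> Prop) (Q : set U -> Prop) : Prop :=
  (forall B, Q B -> exists2 A, P A & (A #<= B)%card) /\
  (forall A, P A -> exists2 B, Q B & (B #<= A)%card).

(* Main.v *)
Require Import Defs.
From HB Require Import structures.
From mathcomp Require Import all_boot all_order all_algebra.
From mathcomp Require Import boolp classical_sets functions cardinality reals topology normedtype sequences.
From mathcomp Require Import finmap zify ring lra.
Set Implicit Arguments. Unset Strict Implicit. Unset Printing Implicit Defensive.
Import Order.TTheory GRing.Theory Num.Theory.
Import numFieldNormedType.Exports.
Local Open Scope classical_set_scope.
Local Open Scope ring_scope.

Lemma sum_lt_min (k n : nat) : (\sum_(j < k) (j < n)%N)%N = minn k n.
Proof.
elim: k => [|k IH]; first by rewrite big_ord0 min0n.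
rewrite big_ord_recr /= IH; case: (ltnP k n) => h /=; lia.
Qed.

Definition ft (f : nat -> nat) (n : nat) : nat := ((n.+1)^2 + \sum_(k < n.+1) f k)%N.

Lemma ft_mono f m n : (m <= n)%N -> (ft f m <= ft f n)%N.
Proof.
move=> mn; rewrite /ft leq_add //; first by rewrite leq_exp2r.
rewrite -(subnKC mn) -addSn big_split_ord /= leq_addr //.
Qed.

Lemma ft_gt f n : (n < ft f n)%N.
Proof. rewrite /ft; nia. Qed.

Lemma ft_ge f n : (f n <= ft f n)%N.
Proof.
rewrite /ft big_ord_recr /=; lia.
Qed.

Definition cntF f (i : nat) : nat := (\sum_(n < i.+1) (ft f n <= i))%N.

Lemma cntF_le f i n : (i < ft f n)%N -> (cntF f i <= n)%N.
Proof.
move=> h; rewrite /cntF (@leq_trans (\sum_(j < i.+1) (j < n)%N)) //.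
  apply: leq_sum => j _; case: (leqP (ft f j) i) => //= hj.
  rewrite lt0b ltnNge; apply/negP => nj.
  have := ft_mono f nj; lia.
by rewrite sum_lt_min geq_minr.
Qed.

Lemma cntF_ge f i n : (ft f n <= i)%N -> (n < cntF f i)%N.
Proof.
move=> h; rewrite /cntF (@leq_trans (\sum_(j < i.+1) (j < n.+1)%N)) //.
  rewrite sum_lt_min; have := ft_gt f n; lia.
apply: leq_sum => j _; case: (ltnP j n.+1) => //= hj.
have hj' : (j <= n)%N by [].
by rewrite lt0b (leq_trans (ft_mono f hj')).
Qed.

Lemma mono_sum (T : numDomainType) (F : nat -> T) (P : pred nat) m m' :
  (forall i, P i -> 0 <= F i) -> (m <= m')%N ->
  \sum_(i < m | P i) F i <= \sum_(i < m' | P i) F i.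
Proof.
move=> F0 mm; rewrite (big_ord_widen_cond m' P F mm).
rewrite [X in _ <= X](bigID (fun i : 'I_m' => (i < m)%N)) /= lerDl.
by apply: sumr_ge0 => i /andP[/F0].
Qed.

Lemma rat_arch (T : archiRealFieldType) (x : T) : exists n : nat, x < n%:R.
Proof.
case: (lerP x 0) => h; first by exists 1%N; apply: (le_lt_trans h).
by exists (Num.Def.archi_bound x); apply: archi_boundP; apply: ltW.
Qed.

Definition af (f : nat -> nat) : rseq := fun i => 1 / (cntF f i).+1%:R.

Lemma af_ge0 f i : 0 <= af f i.
Proof. by rewrite /af divr_ge0. Qed.

Lemma af_lb f i n : (i < ft f n)%N -> 1 / n.+1%:R <= af f i.
Proof.
move=> h; rewrite /af !div1r lef_pV2 ?posrE ?ltr0n // ler_nat ltnS.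
exact: cntF_le.
Qed.

Lemma af_ub f i n : (ft f n <= i)%N -> af f i <= 1 / n.+2%:R.
Proof.
move=> h; rewrite /af !div1r lef_pV2 ?posrE ?ltr0n // ler_nat ltnS.
exact: cntF_ge.
Qed.

Lemma af_sum f n (P : pred nat) :
  (\sum_(i < ft f n | P i) 1%N)%:R / n.+1%:R <= \sum_(i < ft f n | P i) af f i.
Proof.
rewrite natr_sum mulr_suml; apply: ler_sum => i _.
by rewrite mul1r -div1r; apply: af_lb.
Qed.

Lemma af_Sui f : S_ui (af f).
Proof.
split; [|split].
- move=> e e0; have [n hn] := rat_arch e^-1.
  exists (ft f n) => i hi; rewrite ger0_norm ?af_ge0 //.
  apply: (le_lt_trans (af_ub hi)); rewrite div1r -(invrK e) ltf_pV2 ?posrE ?invr_gt0 ?ltr0n //.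
  by apply: (lt_trans hn); rewrite ltr_nat.
- left => M; have [n hn] := rat_arch M.
  exists (ft f n) => m hm; apply: (lt_le_trans hn).
  apply: (le_trans _ (@mono_sum _ (af f) xpredT _ _ (fun i _ => af_ge0 f i) hm)).
  have := af_sum f n xpredT.
  rewrite [X in X%:R / _](_ : _ = ft f n); last first.
    by rewrite sum1_card card_ord.
  apply: le_trans; rewrite ler_pdivlMr ?ltr0n // -natrM ler_nat /ft; nia.
- case=> _ h; have [N hN] := h 0; have := hN N (leqnn N).
  rewrite /psum big1 ?ltxx // => i _.
  by apply/min_idPr; apply: af_ge0.
Qed.

Lemma inf_unbounded (X : set nat) : infinite_set X ->
  forall m, exists i, (m <= i)%N /\ X i.
Proof.
move=> hX m; apply: contrapT => h; apply: hX.
apply: (@sub_finite_set _ _ `I_m); last exact: finite_II.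
move=> i Xi /=; rewrite ltnNge; apply/negP => mi; apply: h; by exists i.
Qed.

Lemma unbounded_inf (X : set nat) :
  (forall m, exists i, (m <= i)%N /\ X i) -> infinite_set X.
Proof.
move=> h /finite_fsetP[B hB].
have [i [hi Xi]] := h (\max_(x <- B) x).+1.
have : i \in B by move: Xi; rewrite hB.
move=> /(fun H => @leq_bigmax_seq _ (enum_fset B) xpredT id i H isT) /=.
by move: hi; rewrite ltnNge => /negP.
Qed.

Definition cntX (X : set nat) (m : nat) : nat := (\sum_(i < m | `[< X i >]) 1)%N.

Lemma cntX_mono X m m' : (m <= m')%N -> (cntX X m <= cntX X m')%N.
Proof.
move=> mm; rewrite /cntX (big_ord_widen_cond m' (fun i => `[< X i >]) (fun _ => 1%N) mm).
rewrite [X in (_ <= X)%N](bigID (fun i : 'I_m' => (i < m)%N)) /=.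
exact: leq_addr.
Qed.

Lemma cntX_unbounded X : infinite_set X -> forall k, exists m, (k <= cntX X m)%N.
Proof.
move=> hX; elim=> [|k [m hm]]; first by exists 0%N.
have [i [mi Xi]] := inf_unbounded hX m.
exists i.+1; rewrite /cntX big_mkcond big_ord_recr /= asboolT // -big_mkcond.
by rewrite -/(cntX X i) addn1 ltnS (leq_trans hm) // cntX_mono.
Qed.

Definition gX (X : set nat) (n : nat) : nat :=
  xget 0%N [set m | ((n.+1)^2 <= cntX X m)%N].

Lemma keyK (R : realType) (X : set nat) f :
  infinite_set X -> subseries_converges R X (af f) -> le_star f (gX X).
Proof.
move=> hX [l /cvgP /cvg_seq_bounded /bounded_fun_has_ubound [M hM]].
have [N hN] := rat_arch M.
exists N => n Nn; case: (leqP (f n) (gX X n)) => // hlt; exfalso.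
have hg : ((n.+1)^2 <= cntX X (gX X n))%N.
  by apply: (@xgetPex _ 0%N [set m | ((n.+1)^2 <= cntX X m)%N]); apply: cntX_unbounded.
have hc : ((n.+1)^2 <= cntX X (ft f n))%N.
  by apply: (leq_trans hg); apply: cntX_mono; apply: ltnW; apply: (leq_trans hlt); apply: ft_ge.
have hs : n.+1%:R <= psumX X (af f) (ft f n).
  apply: le_trans (af_sum f n (fun i => `[< X i >])).
  rewrite -/(cntX X (ft f n)) ler_pdivlMr ?ltr0n // -natrM ler_nat.
  by move: hc; rewrite expnS expn1.
have : ratr (psumX X (af f) (ft f n)) <= M by apply: hM; exists (ft f n).
apply/negP; rewrite -ltNge; apply: (lt_trans hN); apply: (lt_le_trans _ (_ : n.+1%:R <= _)).
  by rewrite ltr_nat ltnS.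
by rewrite -(ratr_nat R) ler_rat.
Qed.

Fixpoint cnt (g : nat -> nat) (i : nat) : nat :=
  match i with 0 => 0 | j.+1 => (cnt g j + (~~ odd j && (g (cnt g j) <= j)))%N end.
Definition memb (g : nat -> nat) (i : nat) : bool := ~~ odd i && (g (cnt g i) <= i)%N.
Definition Xg (g : nat -> nat) : set nat := [set i | memb g i].

Lemma cnt_S g i : cnt g i.+1 = (cnt g i + memb g i)%N.
Proof. by []. Qed.

Lemma cnt_mono g i j : (i <= j)%N -> (cnt g i <= cnt g j)%N.
Proof.
move=> /subnKC <-; elim: (j - i)%N => [|k IH]; first by rewrite addn0.
by rewrite addnS cnt_S (leq_trans IH) ?leq_addr.
Qed.

Lemma memb_unb g i : exists j, (i <= j)%N /\ memb g j.
Proof.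
apply: contrapT => H.
have hc : forall k, cnt g (i + k) = cnt g i.
  elim=> [|k IH]; first by rewrite addn0.
  rewrite addnS cnt_S IH; case h: (memb g (i + k)); last by rewrite addn0.
  by exfalso; apply: H; exists (i + k)%N; rewrite leq_addr h.
apply: H; exists ((i + g (cnt g i)).*2)%N; split; first by rewrite -addnn; lia.
rewrite /memb odd_double /=.
have -> : ((i + g (cnt g i)).*2 = i + (i + g (cnt g i)).*2 - i)%N by rewrite addKn.
rewrite -addnBA; last by rewrite -addnn; lia.
rewrite hc; lia.
Qed.

Lemma Xg_inf g : inf_coinf (Xg g).
Proof.
split; apply: unbounded_inf => m.
  by have [j [h1 h2]] := memb_unb g m; exists j.
exists (m.*2.+1); split; first lia.
by rewrite /Xg /= /memb /= odd_double.
Qed.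

Lemma cnt_unb g k : exists i, (k <= cnt g i)%N.
Proof.
elim: k => [|k [i hi]]; first by exists 0%N.
have [j [ij mj]] := memb_unb g i.
by exists j.+1; rewrite cnt_S mj addn1 ltnS (leq_trans hi) // cnt_mono.
Qed.

Lemma geom_sum g m :
  \sum_(i < m | memb g i) (1/2 : rat)^+(cnt g i) + 2 * (1/2)^+(cnt g m) = 2.
Proof.
elim: m => [|m IH]; first by rewrite big_ord0 /= expr0 add0r mulr1.
rewrite cnt_S big_mkcond big_ord_recr -big_mkcond /=.
case: (memb g m) => /=; last by rewrite addr0 addn0.
rewrite addn1 exprS; move: IH; lra.
Qed.

Definition fa (a : rseq) (n : nat) : nat :=
  xget 0%N [set N | forall i, (N <= i)%N -> `|a i| < (1/2 : rat)^+n].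

Lemma fa_spec a : tends_to_zero a -> forall n i, (fa a n <= i)%N -> `|a i| < (1/2 : rat)^+n.
Proof.
move=> ha n; apply: (@xgetPex _ 0%N [set N | forall i, (N <= i)%N -> `|a i| < (1/2 : rat)^+n]).
by apply: ha; apply: exprn_gt0.
Qed.

Lemma tail_sum (a : rseq) (P : pred nat) i1 m :
  \sum_(i < m | P i) (if (i < i1)%N then `|a i| else 0) <= \sum_(i < i1) `|a i|.
Proof.
apply: (@le_trans _ _ (\sum_(i < m) (if (i < i1)%N then `|a i| else 0))).
  rewrite [X in X <= _]big_mkcond; apply: ler_sum => i _.
  by case: (P i); case: ifP.
apply: (@le_trans _ _ (\sum_(i < maxn m i1) (if (i < i1)%N then `|a i| else 0))).
  apply: (@mono_sum _ (fun i => if (i < i1)%N then `|a i| else 0) xpredT).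
    by move=> i _; case: ifP.
  exact: leq_maxl.
by rewrite (big_ord_widen (maxn m i1) (fun i => `|a i|) (leq_maxr m i1)) [X in _ <= X]big_mkcond /=.
Qed.

Lemma abs_bound (g : nat -> nat) (a : rseq) N i1 :
  tends_to_zero a -> (forall n, (N <= n)%N -> (fa a n <= g n)%N) -> (N <= cnt g i1)%N ->
  forall m, \sum_(i < m | memb g i) `|a i| <= 2 + \sum_(i < i1) `|a i|.
Proof.
move=> ha hN hi1 m.
apply: (@le_trans _ _ (\sum_(i < m | memb g i)
   ((1/2 : rat)^+(cnt g i) + (if (i < i1)%N then `|a i| else 0)))).
  apply: ler_sum => i mi; case: (ltnP i i1) => h.
    by rewrite lerDr exprn_ge0.
  rewrite addr0 ltW //; apply: fa_spec => //.
  have hc : (N <= cnt g i)%N by apply: (leq_trans hi1); apply: cnt_mono.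
  apply: (leq_trans (hN _ hc)); by move: mi => /andP[].
rewrite big_split /=; apply: lerD; last exact: tail_sum.
have h0 : 0 <= 2 * (1/2 : rat)^+(cnt g m) by apply: mulr_ge0 => //; apply: exprn_ge0.
have := geom_sum g m; lra.
Qed.

Lemma keyK2 (R : realType) (g : nat -> nat) (a : rseq) :
  tends_to_zero a -> le_star (fa a) g -> subseries_converges R (Xg g) a.
Proof.
move=> ha [N hN]; have [i1 hi1] := cnt_unb g N.
pose b := fun i => if memb g i then a i else 0.
have E : (fun m => (ratr (psumX (Xg g) a m) : R)) = series (fun i => ratr (b i)).
  apply: funext => m; rewrite seriesEord /= /psumX rmorph_sum big_mkcond /=.
  apply: eq_bigr => i _; rewrite /b /Xg /= asboolb; case: (memb g i) => //.
  by rewrite rmorph0.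
rewrite /subseries_converges E; apply/cvg_ex; apply: normed_cvg.
apply: nondecreasing_is_cvgn.
  move=> m n mn; rewrite /normed_series_of seriesEnat /=.
  by apply: (@nondecreasing_series _ _ xpredT 0%N) => // k _ _.
exists (ratr (2 + \sum_(i < i1) `|a i|)) => _ [n _ <-].
rewrite /normed_series_of seriesEord /=.
have -> : \sum_(i < n) `|(ratr (b i) : R)| = ratr (\sum_(i < n | memb g i) `|a i|).
  rewrite rmorph_sum [RHS]big_mkcond /=; apply: eq_bigr => i _.
  rewrite -ratr_norm /b; case: (memb g i) => //; by rewrite normr0 rmorph0.
rewrite ler_rat; exact: (abs_bound ha hN hi1).
Qed.

Theorem mainTheorem15 (R : realType) :
  same_min_card (ss_family R) dominating_family /\
  same_min_card (ss_perp_family R) unbounded_family.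
Proof.
split; split.
- move=> D hD; exists (Xg @` D); last exact: card_image_le.
  split; first by move=> _ [g _ <-]; apply: Xg_inf.
  move=> a [ha _]; have [g Dg hg] := hD (fa a).
  exists (Xg g); first by exists g.
  exact: keyK2.
- move=> XX [hXX hc]; exists (gX @` XX); last exact: card_image_le.
  move=> f; have [X XXX hX] := hc _ (af_Sui f).
  exists (gX X); first by exists X.
  apply: (keyK (R := R)) => //; exact: (hXX _ XXX).1.
- move=> B hB; exists (af @` B); last exact: card_image_le.
  split; first by move=> _ [f _ <-]; apply: af_Sui.
  move=> [X [hX hall]]; have [f Bf hf] := hB (gX X).
  apply: hf; apply: (keyK (R := R)); first exact: hX.1.
  by apply: hall; exists f.
- move=> A [hA hn]; exists (fa @` A); last exact: card_image_le.
  move=> g; apply: contrapT => hno; apply: hn.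
  exists (Xg g); split; first exact: Xg_inf.
  move=> a Aa; apply: keyK2; first exact: (hA _ Aa).1.
  apply: contrapT => hl; apply: hno; exists (fa a) => //; by exists a.
Qed.
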